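(* Let $G$ be a finite group and $K\trianglelefteq G$ a normal subgroup such that $\eta_g(K)=K$ for some $g\in G$. Then $K$ is inducible.
   Context: Commutators: $[x,y]=x^{-1}y^{-1}xy$, $x^y=y^{-1}xy$; for subsets $X,Y\subseteq G$, $[X,Y]$ is the subgroup generated by all $[x,y]$, and $[X,{}_kY]$ is the iterated commutator $[\cdots[[X,Y],Y]\cdots,Y]$ with $k$ copies of $Y$. $g^G=\{g^x:x\in G\}$. Fix $M\in\mathbb{N}$ with $[X,{}_MY]=[X,{}_iY]$ for all $i\ge M$ and all $X,Y\subseteq G$ with $X^G=X$, $Y^G=Y$; $\eta_g(K)=[K,{}_M\,g^G]$. An expression over $G$ is a word over $G\cup\mathcal{X}\cup\mathcal{X}^{-1}$ ($\mathcal{X}$ variables, $\mathcal{X}^{-1}$ formal inverses), evaluated under assignments $\sigma:\mathcal{X}\to G$ (with $\sigma(X^{-1})=\sigma(X)^{-1}$, $\sigma(g)=g$). A subset $S\subseteq G$ is inducible if there is an expression $\alpha$ with $S=\{\sigma(\alpha):\sigma:\mathcal{X}\to G\}$. *)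

(* Defs.v *)
From mathcomp Require Import all_boot all_fingroup.
Set Implicit Arguments. Unset Strict Implicit. Unset Printing Implicit Defensive.
Import GroupScope.
Open Scope group_scope.

(* Iterated commutator [X, _k Y] = [...[[X,Y],Y]...,Y] (k copies of Y);
   [X,Y] is the subgroup generated by all [x,y] (MathComp's [~: X, Y]),
   and [x,y] = x^-1 y^-1 x y (MathComp's [~ x, y]). *)
Definition itcomm (gT : finGroupType) (X Y : {set gT}) (k : nat) : {set gT} :=
  iter k (fun Z => [~: Z, Y]) X.

Definition normal_subset (gT : finGroupType) (X : {set gT}) : Prop :=
  [set x ^ y | x in X, y in [set: gT]] = X.

Definition stab_index (gT : finGroupType) (M : nat) : Prop :=
  forall (X Y : {set gT}), normal_subset X -> normal_subset Y ->
    forall i, M <= i -> itcomm X Y M = itcomm X Y i.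

Definition eta (gT : finGroupType) (M : nat) (g : gT) (K : {set gT}) : {set gT} :=
  itcomm K (g ^: [set: gT]) M.

(* Expressions: words over G ∪ 𝒳 ∪ 𝒳^{-1}, variables indexed by nat. *)
Inductive letter (gT : finGroupType) : Type :=
  | LConst of gT
  | LVar of nat
  | LInvVar of nat.

Definition expression (gT : finGroupType) := seq (letter gT).

Definition eval_letter (gT : finGroupType) (s : nat -> gT) (l : letter gT) : gT :=
  match l with
  | LConst g => g
  | LVar n => s n
  | LInvVar n => (s n)^-1
  end.

Definition eval_expr (gT : finGroupType) (s : nat -> gT) (a : expression gT) : gT :=
  foldr (fun l acc => eval_letter s l * acc) 1 a.

Definition inducible (gT : finGroupType) (S : {set gT}) : Prop :=
  exists a : expression gT, forall x : gT, x \in S <-> exists s : nat -> gT, eval_expr s a = x.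

(* Main.v *)
Require Import Defs.
From mathcomp Require Import all_boot all_fingroup.
From mathcomp Require Import commutator.
Open Scope group_scope.

Section Aux.
Variable gT : finGroupType.

Definition comm_expr (c : gT) (n : nat) : expression gT :=
  [:: LConst c^-1; LInvVar gT n; LConst c; LVar gT n].

Lemma eval_cat s (a b : expression gT) :
  eval_expr s (a ++ b) = eval_expr s a * eval_expr s b.
Proof.
elim: a => [|l a IH] /=; first by rewrite mul1g.
by rewrite /eval_expr /= -/(eval_expr s (a ++ b)) -/(eval_expr s a) IH mulgA.
Qed.

Lemma eval_comm s c n : eval_expr s (comm_expr c n) = [~ c, s n].
Proof. by rewrite /eval_expr /= mulg1 commgEl /conjg !mulgA. Qed.

Fixpoint blockE (b : nat) (cs : seq gT) : expression gT :=
  match cs with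
  | [::] => [::]
  | c :: cs' => comm_expr c b ++ blockE b.+1 cs'
  end.

Fixpoint fullE (m b k : nat) (cs : seq gT) : expression gT :=
  match k with
  | 0 => [::]
  | k'.+1 => blockE b cs ++ fullE m (b + m) k' cs
  end.

Lemma blockE_cons b c cs : blockE b (c :: cs) = comm_expr c b ++ blockE b.+1 cs.
Proof. by []. Qed.

Lemma fullE_S m b k cs : fullE m b k.+1 cs = blockE b cs ++ fullE m (b + m) k cs.
Proof. by []. Qed.

Lemma block_local b cs s s' :
  (forall n, b <= n < b + size cs -> s n = s' n) ->
  eval_expr s (blockE b cs) = eval_expr s' (blockE b cs).
Proof.
elim: cs b => [|c cs IH] b H //.
rewrite blockE_cons !eval_cat !eval_comm H; last by rewrite leqnn /= addnS ltnS leq_addr.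
congr (_ * _); apply: IH => n /andP[h1 h2]; apply: H.
by rewrite (ltnW h1) /= addnS -addSn.
Qed.

Lemma full_local m b k cs s s' : size cs = m ->
  (forall n, b <= n < b + k * m -> s n = s' n) ->
  eval_expr s (fullE m b k cs) = eval_expr s' (fullE m b k cs).
Proof.
move=> Hm; elim: k b => [|k IH] b H //.
rewrite fullE_S !eval_cat; congr (_ * _).
  apply: block_local => n /andP[h1 h2]; apply: H; rewrite h1 /=.
  apply: leq_trans h2 _; rewrite Hm leq_add2l mulSn leq_addr //.
apply: IH => n /andP[h1 h2]; apply: H.
rewrite (leq_trans (leq_addr _ _) h1) /=.
by rewrite mulSn addnA.
Qed.

Lemma block_one b cs : eval_expr (fun _ => 1) (blockE b cs) = 1.
Proof.
elim: cs b => [|c cs IH] b //.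
by rewrite blockE_cons eval_cat eval_comm commg1 IH mulg1.
Qed.

Lemma block_hit b cs c x : c \in cs ->
  exists f, eval_expr f (blockE b cs) = [~ c, x].
Proof.
elim: cs b => [|c' cs IH] b //.
rewrite blockE_cons inE => /orP[/eqP -> | Hc].
  exists (fun n => if n == b then x else 1).
  rewrite eval_cat eval_comm eqxx.
  rewrite (@block_local _ _ _ (fun _ => 1)); first by rewrite block_one mulg1.
  move=> n /andP[h1 _]; case: eqP => // E; by rewrite E ltnn in h1.
have [f Hf] := IH b.+1 Hc.
exists (fun n => if n == b then 1 else f n).
rewrite eval_cat eval_comm eqxx commg1 mul1g -Hf.
apply: block_local => n /andP[h1 _]; case: eqP => // E; by rewrite E ltnn in h1.
Qed.

End Aux.
Arguments fullE {gT}. Arguments blockE {gT}. Arguments comm_expr {gT}.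

Theorem lemma4p2 (gT : finGroupType) (M : nat) (K : {group gT}) (g : gT) :
  stab_index gT M ->
  K <| [set: gT] ->
  eta M g K = K ->
  inducible K.
Proof.
move=> Hstab Hn Heta.
have nK : forall y, y \in 'N(K).
  move=> y; case/andP: Hn => _ /subsetP; apply; exact: in_setT.
have nsK : normal_subset K.
  apply/setP => x; apply/imset2P/idP.
    by case=> a b Ha _ ->; rewrite memJ_norm.
  by move=> Hx; exists x 1; rewrite ?conjg1 ?in_setT.
have nsY : normal_subset (g ^: [set: gT]).
  apply/setP => x; apply/imset2P/idP.
    case=> a b /imsetP[h _ ->] _ ->; by rewrite -conjgM; apply/imsetP; exists (h * b); rewrite ?in_setT.
  by move=> Hx; exists x 1; rewrite ?conjg1 ?in_setT.
have HK : K :=: [~: K, g ^: [set: gT]].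
  have := Hstab _ _ nsK nsY M.+1 (leqnSn M).
  rewrite /itcomm iterS -/(itcomm K (g ^: [set: gT]) M).
  by rewrite /eta in Heta; rewrite Heta.
have sK : K \subset <<commg_set K [set: gT]>>.
  rewrite {1}HK; apply: commgS; exact: subsetT.
pose cs := enum K; pose m := size cs.
have [n Hn'] := gen_expgs (commg_set K [set: gT]).
exists (fullE m 0 n cs) => x; split.
  move=> /(subsetP sK); rewrite Hn'.
  have gen : forall k b y, y \in (1 |: commg_set K [set: gT]) ^+ k ->
     exists f, eval_expr f (fullE m b k cs) = y.
    elim=> [|k IH] b y.
      by rewrite expg0 => /set1P ->; exists (fun _ => 1).
    rewrite expgS => /mulsgP[y1 y2 Hy1 Hy2 ->].
    have [c [z [Hc ->]]] : exists c z, c \in cs /\ y1 = [~ c, z].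
      case/setU1P: Hy1 => [->|].
        by exists 1, 1; rewrite mem_enum group1 comm1g.
      by case/imset2P => c z Hc _ ->; exists c, z; rewrite mem_enum.
    have [f1 Hf1] := @block_hit gT b cs c z Hc.
    have [f2 Hf2] := IH (b + m) y2 Hy2.
    exists (fun j => if j < b + m then f1 j else f2 j).
    rewrite fullE_S eval_cat; congr (_ * _).
      rewrite -Hf1; apply: block_local => j /andP[_ h]; by rewrite h.
    rewrite -Hf2; apply: full_local => // j /andP[h _]; by rewrite ltnNge h.
  exact: gen.
case=> s <-.
have blk : forall b cs' s', {subset cs' <= K} -> eval_expr s' (blockE b cs') \in K.
  move=> b cs' s'; elim: cs' b => [|c cs' IH] b Hs; first exact: group1.
  rewrite blockE_cons eval_cat eval_comm groupM //; last by apply: IH => y Hy; apply: Hs; rewrite inE Hy orbT.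
  have Hc : c \in K by apply: Hs; rewrite inE eqxx.
  by rewrite commgEl groupM ?groupV ?memJ_norm.
have : forall k b, eval_expr s (fullE m b k cs) \in K.
  elim=> [|k IH] b; first exact: group1.
  rewrite fullE_S eval_cat groupM // blk // => y; by rewrite mem_enum.
by apply.
Qed.
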